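(* Let $K$ be a skew field with center $P$ and an involution, $\mathcal C$ a linear category over $P$ with involution, and $S_0$ a set of objects containing exactly one object from each pair $\{u,u^*\}$. If a representation $A$ of $\mathcal C$ over $K$ is isomorphic to a selfadjoint representation, then there exist a selfadjoint representation $B$ and an isomorphism $h:A\to B$ such that $B_v=A_v$ and $h_v=1$ for all $v\in S_0$.
   Context: $K$ has an involution $a\mapsto\bar a$. Linear category over $P$: $P$-vector-space Hom sets, bilinear composition; involution on it: $u\mapsto u^*$, $(\alpha:u\to v)\mapsto(\alpha^*:v^*\to u^* )$, $u^{**}=u\ne u^*$, $\alpha^{**}=\alpha$, $(\alpha\beta)^*=\beta^*\alpha^*$, $(\alpha a)^*=\alpha^*\bar a$. Representations: functors to finite-dimensional right $K$-spaces, finite total dimension, preserving $P$-linear combinations; morphisms: natural transformations. $V^*$: semilinear forms ($\varphi(xa)=\bar a\varphi(x)$), $A^*\varphi=\varphi A$, $V^{**}=V$. Adjoint representation: $A^\circ_u=(A_{u^*})^*$, $A^\circ_\alpha=(A_{\alpha^*})^*$; selfadjoint means $A=A^\circ$. *)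

(* Defs.v *)
From HB Require Import structures.
From mathcomp Require Import all_boot all_order all_algebra.
From Stdlib Require List.
Set Implicit Arguments. Unset Strict Implicit. Unset Printing Implicit Defensive.
Import GRing.Theory.
Local Open Scope ring_scope.

Record lincat (P : fieldType) := LinCat {
  obj : Type;
  hom : obj -> obj -> lmodType P;
  idm : forall u, hom u u;
  comp : forall u v w, hom v w -> hom u v -> hom u w;
  ostar : obj -> obj;
  hstar : forall u v, hom u v -> hom (ostar v) (ostar u) }.

Arguments obj {P} _.
Arguments hom {P} _ _ _.
Arguments idm {P} _ _.
Arguments comp {P _ _ _ _}.
Arguments ostar {P} _ _.
Arguments hstar {P _ _ _}.

Definition hcast (P : fieldType) (C : lincat P) (u u' v v' : obj C)
  (eu : u = u') (ev : v = v') (a : hom C u v) : hom C u' v' :=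
  match eu in _ = u1, ev in _ = v1 return hom C u1 v1 with
  | erefl, erefl => a end.

(* Axioms: linear category over P (bilinear associative unital composition)
   with an involution; conjP is the involution of K restricted to P. *)
Definition is_lincat_inv (P : fieldType) (conjP : P -> P) (C : lincat P)
  (starK : forall u, ostar C (ostar C u) = u) : Prop :=
  [/\ (forall u v w x (a : hom C w x) (b : hom C v w) (c : hom C u v),
          comp a (comp b c) = comp (comp a b) c),
      (forall u v (a : hom C u v), comp (idm C v) a = a /\ comp a (idm C u) = a),
      (forall u v w (a a' : hom C v w) (b b' : hom C u v) (p : P),
          [/\ comp (a + a') b = comp a b + comp a' b,
              comp a (b + b') = comp a b + comp a b',
              comp (p *: a) b = p *: comp a b &
              comp a (p *: b) = p *: comp a b]),
      (forall u, ostar C u <> u) &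
      (forall u v w (a a' : hom C u v) (b : hom C w u) (p : P),
          [/\ hstar (a + a') = hstar a + hstar a',
              hstar (p *: a) = conjP p *: hstar a,
              hstar (comp a b) = comp (hstar b) (hstar a) &
              hcast (starK u) (starK v) (hstar (hstar a)) = a])].

(* Representations over K, in coordinates: the space at u is the right
   K-space K^(rdim u) (column vectors), a K-linear map is a matrix acting
   on the left. *)
Record rep (K : nzRingType) (P : fieldType) (C : lincat P) := Rep {
  rdim : obj C -> nat;
  rmap : forall u v, hom C u v -> 'M[K]_(rdim v, rdim u) }.

Arguments rmap {K P C} _ {_ _}.

Definition is_rep (K : nzRingType) (P : fieldType) (C : lincat P)
  (iota : P -> K) (A : rep K C) : Prop :=
  [/\ (exists s : seq (obj C), forall u, (0 < rdim A u)%N -> List.In u s),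
      (forall u, rmap A (idm C u) = 1%:M),
      (forall u v w (a : hom C v w) (b : hom C u v),
          rmap A (comp a b) = rmap A a *m rmap A b),
      (forall u v (a b : hom C u v), rmap A (a + b) = rmap A a + rmap A b) &
      (forall u v (p : P) (a : hom C u v), rmap A (p *: a) = iota p *: rmap A a)].

Definition is_rep_mor (K : nzRingType) (P : fieldType) (C : lincat P)
  (A B : rep K C) (f : forall u, 'M[K]_(rdim B u, rdim A u)) : Prop :=
  forall u v (a : hom C u v), f v *m rmap A a = rmap B a *m f u.

Definition is_rep_iso (K : nzRingType) (P : fieldType) (C : lincat P)
  (A B : rep K C) (f : forall u, 'M[K]_(rdim B u, rdim A u)) : Prop :=
  is_rep_mor f /\
  forall u, exists g : 'M[K]_(rdim A u, rdim B u), g *m f u = 1%:M /\ f u *m g = 1%:M.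

(* Dual map of A, namely phi |-> phi A, in coordinates: identifying the space of
   semilinear forms on K^n with K^n via c |-> (x |-> sum_i conj(x_i) c_i),
   the dual of the matrix M is its conjugate transpose. *)
Definition conjT (K : nzRingType) (conj : K -> K) m n (M : 'M[K]_(m, n))
  : 'M[K]_(n, m) := \matrix_(i, j) conj (M j i).

Definition adjoint (K : nzRingType) (P : fieldType) (C : lincat P)
  (conj : K -> K) (A : rep K C) : rep K C :=
  @Rep K P C (fun u => rdim A (ostar C u))
    (fun u v a => conjT conj (rmap A (hstar a))).

(* Main.v *)
Require Import Defs.
From HB Require Import structures.
From mathcomp Require Import all_boot all_order all_algebra.
From Stdlib Require Import FunctionalExtensionality.
Set Implicit Arguments. Unset Strict Implicit. Unset Printing Implicit Defensive.
Import GRing.Theory.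
Local Open Scope ring_scope.

Section EM.
Context (K : nzRingType) (conj : K -> K).
Context (conjD : forall x y : K, conj (x + y) = conj x + conj y).
Context (conjM : forall x y : K, conj (x * y) = conj y * conj x).
Context (conjK : forall x : K, conj (conj x) = x).

Lemma conj0 : conj 0 = 0.
Proof. have h := conjD 0 0; rewrite addr0 in h; apply: (addrI (conj 0)); by rewrite -h addr0. Qed.

Lemma conj1 : conj 1 = 1.
Proof. have := conjM (conj 1) 1; rewrite mulr1 !conjK mulr1 => h; by rewrite -h. Qed.

Lemma conj_sum I (r : seq I) (Pr : pred I) (F : I -> K) :
  conj (\sum_(i <- r | Pr i) F i) = \sum_(i <- r | Pr i) conj (F i).
Proof. exact: (big_morph conj conjD conj0). Qed.

Definition E m n (M : 'M[K]_(m,n)) (i j : nat) : K :=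
  match (insub i : option 'I_m), (insub j : option 'I_n) with
  | Some i', Some j' => M i' j' | _, _ => 0 end.

Definition mulE (p : nat) (F G : nat -> nat -> K) (i j : nat) : K :=
  \sum_(k < p) F i k * G k j.
Definition conjE (F : nat -> nat -> K) (i j : nat) : K := conj (F j i).

Lemma E_ord m n (M : 'M[K]_(m,n)) (i : 'I_m) (j : 'I_n) : E M i j = M i j.
Proof. by rewrite /E !valK. Qed.

Lemma E_outl m n (M : 'M[K]_(m,n)) i j : ~~ (i < m)%N -> E M i j = 0.
Proof. by move=> h; rewrite /E insubN. Qed.
Lemma E_outr m n (M : 'M[K]_(m,n)) i j : ~~ (j < n)%N -> E M i j = 0.
Proof. move=> h; rewrite /E; case: (insub i) => // i0; by rewrite insubN. Qed.

Lemma E_inj m n (M N : 'M[K]_(m,n)) : E M = E N -> M = N.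
Proof. by move=> h; apply/matrixP => i j; rewrite -!E_ord h. Qed.

Lemma E_cast m n m' n' (e : (m = m') * (n = n')) (M : 'M[K]_(m,n)) :
  E (castmx e M) = E M.
Proof. case: e => e1 e2; case: m' / e1; case: n' / e2; by rewrite castmx_id. Qed.

Lemma E_mul m p n (M : 'M[K]_(m,p)) (N : 'M[K]_(p,n)) :
  E (M *m N) = mulE p (E M) (E N).
Proof.
apply: functional_extensionality => i; apply: functional_extensionality => j.
rewrite /mulE.
case: (ltnP i m) => hi; last first.
  rewrite E_outl ?ltnNge ?hi //; apply/esym/big1 => k _; by rewrite E_outl ?mul0r ?ltnNge ?hi.
case: (ltnP j n) => hj; last first.
  rewrite E_outr ?ltnNge ?hj //; apply/esym/big1 => k _; by rewrite (E_outr N) ?mulr0 ?ltnNge ?hj.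
have -> : i = Ordinal hi by []. have -> : j = Ordinal hj by [].
rewrite E_ord mxE; apply: eq_bigr => k _; by rewrite !E_ord.
Qed.


Lemma E_conjT m n (M : 'M[K]_(m,n)) : E (conjT conj M) = conjE (E M).
Proof.
apply: functional_extensionality => i; apply: functional_extensionality => j.
rewrite /conjE.
case: (ltnP i n) => hi; last by rewrite E_outl ?ltnNge ?hi // E_outr ?ltnNge ?hi // conj0.
case: (ltnP j m) => hj; last by rewrite E_outr ?ltnNge ?hj // E_outl ?ltnNge ?hj // conj0.
have -> : i = Ordinal hi by []. have -> : j = Ordinal hj by [].
by rewrite !E_ord mxE.
Qed.

Lemma conjEK F : conjE (conjE F) = F.
Proof. by do 2 apply: functional_extensionality => ?; rewrite /conjE conjK. Qed.

Lemma conjE_mul p F G : conjE (mulE p F G) = mulE p (conjE G) (conjE F).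
Proof.
do 2 apply: functional_extensionality => ?; rewrite /conjE /mulE conj_sum.
by apply: eq_bigr => k _; rewrite conjM.
Qed.

Definition idE m (i j : nat) : K := ((i == j) && (i < m)%N)%:R.

Lemma E_1 m : E (1%:M : 'M[K]_m) = idE m.
Proof.
apply: functional_extensionality => i; apply: functional_extensionality => j; rewrite /idE.
case: (ltnP i m) => hi; last by rewrite E_outl ?ltnNge ?hi // andbF.
case: (ltnP j m) => hj; last first.
  rewrite E_outr ?ltnNge ?hj //; case: eqP => // eij; move: hj; by rewrite -eij leqNgt hi.
have -> : i = Ordinal hi by []. have -> : j = Ordinal hj by [].
by rewrite E_ord mxE /= andbT.
Qed.

Lemma conjE_id m : conjE (idE m) = idE m.
Proof.
apply: functional_extensionality => i; apply: functional_extensionality => j; rewrite /conjE /idE eq_sym.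
case: eqP => [->|] /=; last by rewrite conj0.
by case: (j < m)%N; rewrite ?conj1 ?conj0.
Qed.

End EM.

From Stdlib Require Import ClassicalEpsilon List.

Lemma scalemxAr_c (K : nzRingType) (c : K) (hc : forall y, c * y = y * c) m n p
  (A : 'M[K]_(m,n)) (B : 'M[K]_(n,p)) : A *m (c *: B) = c *: (A *m B).
Proof.
apply/matrixP => i j; rewrite !mxE mulr_sumr; apply: eq_bigr => l _.
by rewrite mxE mulrA -hc mulrA.
Qed.

Lemma rep_eq_E (K : nzRingType) (P : fieldType) (C : lincat P) (R1 R2 : rep K C)
  (H : R1 = R2) u v (a : Defs.hom C u v) : E (rmap R1 a) = E (rmap R2 a).
Proof. by case: R2 / H. Qed.

Lemma rep_ext (K : nzRingType) (P : fieldType) (C : lincat P) (d1 d2 : obj C -> nat)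
  (m1 : forall u v, Defs.hom C u v -> 'M[K]_(d1 v, d1 u))
  (m2 : forall u v, Defs.hom C u v -> 'M[K]_(d2 v, d2 u)) (e : d1 = d2) :
  (forall u v a, E (m1 u v a) = E (m2 u v a)) -> Rep m1 = Rep m2.
Proof.
subst d2 => hm.
have -> : m1 = m2; last by [].
apply: functional_extensionality_dep => u; apply: functional_extensionality_dep => v.
apply: functional_extensionality_dep => a; exact: E_inj.
Qed.

Theorem lemma6 (K : unitRingType) (P : fieldType) (iota : {rmorphism P -> K})
  (conj : K -> K) (conjP : P -> P) (C : lincat P)
  (starK : forall u, ostar C (ostar C u) = u)
  (S0 : obj C -> Prop) (A : rep K C) :
  (forall x : K, x != 0 -> x \is a GRing.unit) ->
  (forall x : K, (forall y, x * y = y * x) <-> exists p, x = iota p) ->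
  (forall x y : K, conj (x + y) = conj x + conj y) ->
  (forall x y : K, conj (x * y) = conj y * conj x) ->
  (forall x : K, conj (conj x) = x) ->
  (forall p : P, iota (conjP p) = conj (iota p)) ->
  is_lincat_inv conjP starK ->
  (forall u, S0 u <-> ~ S0 (ostar C u)) ->
  is_rep iota A ->
  (exists (A' : rep K C) (f : forall u, 'M[K]_(rdim A' u, rdim A u)),
      [/\ is_rep iota A', A' = adjoint conj A' & is_rep_iso f]) ->
  exists (B : rep K C) (h : forall u, 'M[K]_(rdim B u, rdim A u)),
    [/\ is_rep iota B, B = adjoint conj B, is_rep_iso h &
        forall v, S0 v ->
          rdim B v = rdim A v /\
          (forall (i : 'I_(rdim B v)) (j : 'I_(rdim A v)),
              h v i j = (nat_of_ord i == nat_of_ord j)%:R)].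
Proof.
move=> _ central conjD conjM conjK _ _ HS0 HA [A' [f [HA' Hadj [Hf Hfinv]]]].
pose g u := proj1_sig (constructive_indefinite_description _ (Hfinv u)).
have Hg u : g u *m f u = 1%:M /\ f u *m g u = 1%:M.
  exact: (proj2_sig (constructive_indefinite_description _ (Hfinv u))).
pose sb u := if excluded_middle_informative (S0 u) then true else false.
have sbP u : sb u = true <-> S0 u.
  by rewrite /sb; case: excluded_middle_informative.
have sb_star u : sb (ostar C u) = ~~ sb u.
  case h: (sb u) => /=.
    have /HS0 : S0 u by apply/sbP.
    by move=> hn; apply/negP => /sbP.
  have hn : ~ S0 u by move=> /sbP; rewrite h.
  apply/sbP; apply: NNPP => hn'; apply: hn; exact/HS0.
pose n := rdim A. pose n' := rdim A'.
have e' u : n' (ostar C u) = n' u.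
  by rewrite /n' [in RHS]Hadj.
have HadjE u v (a : Defs.hom C u v) : E (rmap A' a) = conjE conj (E (rmap A' (hstar a))).
  by rewrite [in LHS](rep_eq_E Hadj) /= E_conjT.
pose d u := n (if sb u then u else ostar C u).
pose k u := match sb u as b return 'M[K]_(n (if b then u else ostar C u), n' u) with
  | true => g u | false => castmx (erefl, e' u) (conjT conj (f (ostar C u))) end.
pose kinv u := match sb u as b return 'M[K]_(n' u, n (if b then u else ostar C u)) with
  | true => f u | false => castmx (e' u, erefl) (conjT conj (g (ostar C u))) end.
have Ek_t u : sb u = true -> E (k u) = E (g u).
  by rewrite /k; case: (sb u).
have Ek_f u : sb u = false -> E (k u) = conjE conj (E (f (ostar C u))).
  by rewrite /k; case: (sb u) => // _; rewrite E_cast E_conjT.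
have Eki_t u : sb u = true -> E (kinv u) = E (f u).
  by rewrite /kinv; case: (sb u).
have Eki_f u : sb u = false -> E (kinv u) = conjE conj (E (g (ostar C u))).
  by rewrite /kinv; case: (sb u) => // _; rewrite E_cast E_conjT.
have cEK := conjEK conjK.
have cEM := conjE_mul conjD conjM.
have cEI := conjE_id conjD conjM conjK.
have K1 v : conjE conj (E (kinv (ostar C v))) = E (k v).
  have [hv|hv] : sb v = true \/ sb v = false by case: (sb v); [left|right].
    rewrite Eki_f ?sb_star ?hv // starK cEK Ek_t //.
  by rewrite Eki_t ?sb_star ?hv // Ek_f.
have K2 u : conjE conj (E (k (ostar C u))) = E (kinv u).
  by rewrite -K1 cEK starK.
have d_star u : d (ostar C u) = d u.
  by rewrite /d sb_star; case: (sb u) => /=; rewrite ?starK.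
have kk1 u : k u *m kinv u = 1%:M.
  apply: E_inj; rewrite E_mul E_1; have [hu|hu] : sb u = true \/ sb u = false by case: (sb u); [left|right].
    by rewrite Ek_t // Eki_t // -E_mul (proj1 (Hg u)) E_1 hu.
  rewrite Ek_f // Eki_f // -cEM -(e' u) -E_mul (proj1 (Hg (ostar C u))) E_1 cEI.
  by rewrite hu.
have kk2 u : kinv u *m k u = 1%:M.
  apply: E_inj; rewrite E_mul E_1; have [hu|hu] : sb u = true \/ sb u = false by case: (sb u); [left|right].
    by rewrite Ek_t // Eki_t // hu -E_mul (proj2 (Hg u)) E_1.
  rewrite Ek_f // Eki_f // hu -cEM -E_mul (proj2 (Hg (ostar C u))) E_1 cEI; exact: (congr1 _ (e' u)).
pose mB u v (a : Defs.hom C u v) : 'M[K]_(d v, d u) := k v *m rmap A' a *m kinv u.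
pose B := @Rep K P C d mB.
pose h u : 'M[K]_(d u, n u) := k u *m f u.
exists B, h; split.
- case: HA => [[s hs] _ _ _ _]; case: HA' => [_ hid hcomp hadd hscal]; split.
  + exists (s ++ map (ostar C) s) => u /= hu; apply: in_or_app.
    have [hv|hv] : sb u = true \/ sb u = false by case: (sb u); [left|right].
      by left; apply: hs; move: hu; rewrite /d hv.
    right; rewrite -(starK u); apply: in_map; apply: hs; by move: hu; rewrite /d hv.
  + by move=> u /=; rewrite /mB hid mulmx1 kk1.
  + move=> u v w a b /=; rewrite /mB hcomp !mulmxA.
    by rewrite -(mulmxA (k w *m rmap A' a) (kinv v)) kk2 mulmx1.
  + by move=> u v a b /=; rewrite /mB hadd mulmxDr mulmxDl.
  + move=> u v p a /=; rewrite /mB hscal.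
    have hc : forall y, iota p * y = y * iota p by apply/central; exists p.
    by rewrite (scalemxAr_c hc) -scalemxAl.
- rewrite /B /adjoint /=; apply: rep_ext.
    by apply: functional_extensionality => u; rewrite d_star.
  move=> u v a /=; rewrite /mB (E_conjT conjD) !E_mul !cEM K1 K2 -HadjE !e' -!E_mul.
  by rewrite -mulmxA E_mul; have := e' v; rewrite /n' => ->.
- split.
  + move=> u v a; rewrite /h /= /mB. rewrite -[LHS]mulmxA Hf !mulmxA.
    by rewrite -(mulmxA (k v *m rmap A' a) (kinv u)) kk2 mulmx1.
  + move=> u; exists (g u *m kinv u); rewrite /h; split.
      by rewrite mulmxA -(mulmxA (g u)) kk2 mulmx1 (proj1 (Hg u)).
    by rewrite mulmxA -(mulmxA (k u)) (proj2 (Hg u)) mulmx1 kk1.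
- move=> v /sbP hv.
  have dv : d v = n v by rewrite /d hv.
  split; first exact: dv.
  move=> i j.
  have hi : (i < n v)%N by rewrite -dv; exact: ltn_ord.
  rewrite -[LHS]E_ord /h E_mul Ek_t // -E_mul (proj1 (Hg v)) E_1 /idE.
  by rewrite hi andbT.
Qed.
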